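(* Let $\mathfrak g$ be a semisimple Lie algebra of $r\times r$ matrices, identified with its dual via the trace form, $N\ge2$, and let $P$ and $R$ be the Poisson tensors on $\mathfrak g^N$ described in the context. For $2\le l\le N$ put $B_l=\sum_{i=1}^{l-1}A_i$ and, for integers $\beta\ge2$ and $\alpha$, let $F^{(\alpha)}_{\beta,l}=\mathrm{res}_{\lambda=0}\lambda^{-\alpha-1}(\lambda A_l+B_l)^\beta$ (the coefficient of $\lambda^\alpha$ in $(\lambda A_l+B_l)^\beta$) and $H^{(\alpha)}_{\beta,l}=\mathrm{Tr}(F^{(\alpha)}_{\beta,l})$. Then for $\alpha=1,\dots,\beta$, $$P\,dH^{(\alpha-1)}_{\beta,l}=\big(R-(l-2)P\big)\,dH^{(\alpha)}_{\beta,l}.$$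
   Context: For $F$ smooth on $\mathfrak g^N\ni(A_1,\dots,A_N)$, $\partial F/\partial A_i\in\mathfrak g$ is the gradient with respect to the trace form: $F(\dots,A_i+t\Xi,\dots)=F+t\,\mathrm{Tr}(\frac{\partial F}{\partial A_i}\Xi)+o(t)$ for all $\Xi\in\mathfrak g$. The diagonal tensor $P$: $(P\,dF)_i=[A_i,\partial F/\partial A_i]$. The tensor $R$: $(R\,dF)_i=[(i-1)A_i-\sum_{k=1}^{i-1}A_k,\partial F/\partial A_i]+\sum_{j\ne i}[A_{\min(i,j)},\partial F/\partial A_j]$, $i=1,\dots,N$. Here $dF$ is identified with the $N$-tuple $(\partial F/\partial A_1,\dots,\partial F/\partial A_N)$. *)

(* Defs.v *)
From HB Require Import structures.
From mathcomp Require Import all_boot all_order all_algebra.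
Set Implicit Arguments. Unset Strict Implicit. Unset Printing Implicit Defensive.
Import Order.TTheory GRing.Theory Num.Theory.
Local Open Scope ring_scope.

Section Defs.
Variables (K : fieldType) (r : nat).
Notation M := ('M[K]_(r, r)).

Definition lie (x y : M) : M := x *m y - y *m x.

Definition lie_subalgebra (g : {vspace M}) : Prop :=
  forall x y, x \in g -> y \in g -> lie x y \in g.

Definition lie_ideal (g I : {vspace M}) : Prop :=
  (I <= g)%VS /\ forall x y, x \in g -> y \in I -> lie x y \in I.

(* semisimple: no nonzero abelian ideal (equivalently, no nonzero solvable ideal) *)
Definition semisimple (g : {vspace M}) : Prop :=
  forall I : {vspace M}, lie_ideal g I ->
    (forall x y, x \in I -> y \in I -> lie x y = 0) -> I = 0%VS.

(* the trace form is nondegenerate on g (g identified with its dual) *)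
Definition trace_nondeg (g : {vspace M}) : Prop :=
  forall x, x \in g -> (forall y, y \in g -> \tr (x *m y) = 0) -> x = 0.

(* Points of g^N are functions A : nat -> M, component i (1 <= i <= N) = A_i. *)
Definition upd (A : nat -> M) (i : nat) (X : M) : nat -> M :=
  fun k => if k == i then X else A k.

(* G = dF/dA_i at A w.r.t. the trace form: G in g, and for all Xi in g,
   t |-> F(.., A_i + t Xi, ..) is polynomial with linear coefficient Tr(G Xi),
   i.e. F(.., A_i + t Xi, ..) = F + t Tr(G Xi) + O(t^2). *)
Definition is_grad (g : {vspace M}) (F : (nat -> M) -> K) (A : nat -> M)
    (i : nat) (G : M) : Prop :=
  G \in g /\
  forall Xi, Xi \in g -> exists q : {poly K},
    (forall t : K, F (upd A i (A i + t *: Xi)) = q.[t]) /\ q`_1 = \tr (G *m Xi).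

(* dF at A identified with the N-tuple of gradients *)
Definition is_diff (g : {vspace M}) (N : nat) (F : (nat -> M) -> K)
    (A : nat -> M) (G : nat -> M) : Prop :=
  forall i, (1 <= i <= N)%N -> is_grad g F A i (G i).

Definition Pop (A G : nat -> M) (i : nat) : M := lie (A i) (G i).

Definition Rop (N : nat) (A G : nat -> M) (i : nat) : M :=
  lie ((i.-1)%:R *: A i - \sum_(1 <= k < i) A k) (G i)
  + \sum_(1 <= j < N.+1 | j != i) lie (A (minn i j)) (G j).

Definition Bl (A : nat -> M) (l : nat) : M := \sum_(1 <= k < l) A k.

Definition Fab (l beta alpha : nat) (A : nat -> M) : M :=
  \matrix_(a < r, b < r)
    (((('X *: map_mx (@polyC K) (A l) + map_mx (@polyC K) (Bl A l))
        : 'M[{poly K}]_r) ^+ beta) a b)`_alpha.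

Definition Hab (l beta alpha : nat) (A : nat -> M) : K := \tr (Fab l beta alpha A).

End Defs.

(* Main.v *)
Require Import Defs.
From HB Require Import structures.
From mathcomp Require Import all_boot all_order all_algebra.
From mathcomp Require Import zify.
From Stdlib Require ClassicalEpsilon.
Set Implicit Arguments. Unset Strict Implicit. Unset Printing Implicit Defensive.
Import Order.TTheory GRing.Theory Num.Theory.
Local Open Scope ring_scope.

Section PolyMx.
Variables (K : fieldType) (r : nat).
Notation MP := ('M[{poly K}]_r).
Notation M := ('M[K]_r).
Definition pc (A : M) : MP := map_mx (@polyC K) A.
Definition cmx (m : nat) (X : MP) : M := \matrix_(a < r, b < r) (X a b)`_m.

Lemma cmxD m X Y : cmx m (X + Y) = cmx m X + cmx m Y.
Proof. by apply/matrixP => a b; rewrite !mxE coefD. Qed.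
Lemma cmxB m X Y : cmx m (X - Y) = cmx m X - cmx m Y.
Proof. by apply/matrixP => a b; rewrite !mxE coefB. Qed.
Lemma cmx0 m : cmx m 0 = 0.
Proof. by apply/matrixP => a b; rewrite !mxE coef0. Qed.
Lemma cmx_sum m n (F : 'I_n -> MP) :
  cmx m (\sum_(k < n) F k) = \sum_(k < n) cmx m (F k).
Proof.
apply/matrixP => a b; rewrite mxE !summxE coef_sum; apply: eq_bigr => k _.
by rewrite mxE.
Qed.
Lemma cmxCZ m c X : cmx m (c%:P *: X) = c *: cmx m X.
Proof. by apply/matrixP => a b; rewrite !mxE coefCM. Qed.
Lemma cmx_pcl m A X : cmx m (pc A *m X) = A *m cmx m X.
Proof.
apply/matrixP => a b; rewrite !mxE coef_sum; apply: eq_bigr => c _.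
by rewrite !mxE coefCM.
Qed.
Lemma cmx_pcr m A X : cmx m (X *m pc A) = cmx m X *m A.
Proof.
apply/matrixP => a b; rewrite !mxE coef_sum; apply: eq_bigr => c _.
by rewrite !mxE coefMC.
Qed.
Lemma cmxX m X : cmx m ('X *: X) = if m is m'.+1 then cmx m' X else 0.
Proof.
case: m => [|m]; apply/matrixP => a b; rewrite !mxE coefXM //.
Qed.
Lemma tr_cmx m X : \tr (cmx m X) = (\tr X)`_m.
Proof. rewrite /mxtrace coef_sum; apply: eq_bigr => k _; by rewrite mxE. Qed.

Variables (P Q : MP).
Fixpoint Sx n m : MP := match n with
  | 0 => if m == 0 then 1 else 0
  | n'.+1 => Sx n' m *m P + (if m is m'.+1 then Sx n' m' *m Q else 0) end.

Lemma S_gt n m : (n < m)%N -> Sx n m = 0.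
Proof.
elim: n m => [|n IH] [|m] //= H.
rewrite (IH m.+1); last by apply: ltnW.
by rewrite (IH m) // !mul0mx addr0.
Qed.

Lemma expand (c : {poly K}) n :
  (P + c *: Q) ^+ n = \sum_(m < n.+1) c ^+ m *: Sx n m.
Proof.
elim: n => [|n IH].
  by rewrite expr0 big_ord_recl big_ord0 expr0 scale1r addr0.
rewrite exprSr IH -mulmxE mulmxDr !mulmx_suml.
rewrite /=; under [in RHS]eq_bigr do rewrite scalerDr.
rewrite big_split /=; congr (_ + _).
  rewrite [in RHS]big_ord_recr /= S_gt // mul0mx scaler0 addr0.
  by apply: eq_bigr => m _; rewrite scalemxAl.
rewrite [in RHS]big_ord_recl /= scaler0 add0r; apply: eq_bigr => m _.
by rewrite -scalemxAr -scalemxAl scalerA -exprS.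
Qed.

Lemma S0 n : Sx n 0 = P ^+ n.
Proof.
elim: n => [|n IH] /=; first by rewrite expr0.
by rewrite IH addr0 exprSr mulmxE.
Qed.

Lemma trS1 n j : \tr (Sx n 1 *m P ^+ j) = \tr (Q *m P ^+ (n.-1 + j)) *+ n.
Proof.
elim: n j => [|n IH] j /=; first by rewrite mul0mx mxtrace0 mulr0n.
have E : \tr (P ^+ n *m (Q *m P ^+ j)) = \tr (Q *m P ^+ (n + j)).
  by rewrite mxtrace_mulC -mulmxA mulmxE -exprD addnC.
rewrite mulmxDl mxtraceD S0 -[P ^+ n *m Q *m _]mulmxA E -mulmxA mulmxE -exprS IH -!mulmxE.
case: n {IH E} => [|n]; first by rewrite mulr0n add0r.
by rewrite /= addnS -addSn [in RHS]mulrSr.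
Qed.
End PolyMx.

Lemma natr_inj0 (K : fieldType) : [pchar K] =i pred0 ->
  injective (fun n : nat => n%:R : K).
Proof.
move=> /pcharf0P h m n /= E.
wlog le: m n E / (m <= n)%N.
  move=> W; case/orP: (leq_total m n) => H; first exact: W.
  by apply/esym/W.
apply/eqP; rewrite eqn_leq le /=.
have : ((n - m)%:R == 0 :> K) by rewrite natrB // E subrr.
by rewrite h subn_eq0.
Qed.

Lemma poly_eq_ev (K : fieldType) : [pchar K] =i pred0 ->
  forall p q : {poly K}, (forall t, p.[t] = q.[t]) -> p = q.
Proof.
move=> h p q E; apply/eqP; rewrite -subr_eq0; apply/negPn/negP => nz.
pose rs := [seq (i%:R : K) | i <- iota 0 (size (p - q))].
have H1 : all (root (p - q)) rs.
  by apply/allP => x _; rewrite /root hornerD hornerN E subrr.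
have H2 : uniq rs.
  by rewrite map_inj_uniq ?iota_uniq //; apply: natr_inj0.
by have := max_poly_roots nz H1 H2; rewrite size_map size_iota ltnn.
Qed.

Lemma trZl (K : fieldType) (r : nat) (c : K) (Y Z : 'M[K]_r) :
  \tr ((c *: Y) *m Z) = c * \tr (Y *m Z).
Proof. by rewrite -scalemxAl mxtraceZ. Qed.

Lemma trZr (K : fieldType) (r : nat) (c : K) (Y Z : 'M[K]_r) :
  \tr (Y *m (c *: Z)) = c * \tr (Y *m Z).
Proof. by rewrite -scalemxAr mxtraceZ. Qed.

Section Proj.
Variables (K : fieldType) (r : nat).
Notation M := ('M[K]_(r, r)).
Variable g : {vspace M}.
Hypothesis nd : forall x, x \in g -> (forall y, y \in g -> \tr (x *m y) = 0) -> x = 0.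

Definition phi (Y : M) : 'rV[K]_(\dim g) :=
  \row_k \tr (Y *m (vbasis g)`_k).

Lemma phi_lin : linear phi.
Proof.
move=> c Y Z; apply/rowP => k; rewrite !mxE mulmxDl mxtraceD.
by rewrite trZl.
Qed.
HB.instance Definition _ := GRing.isLinear.Build K M 'rV[K]_(\dim g) _ phi phi_lin.

Lemma tr_basis G X : (forall k : 'I_(\dim g), \tr (G *m (vbasis g)`_k) = \tr (X *m (vbasis g)`_k)) ->
  forall Y, Y \in g -> \tr (G *m Y) = \tr (X *m Y).
Proof.
move=> H Y /coord_vbasis ->.
rewrite !mulmx_sumr !raddf_sum; apply: eq_bigr => k _.
rewrite /=. by rewrite !trZr H.
Qed.

Lemma proj_ex X : exists G, G \in g /\ forall Y, Y \in g -> \tr (G *m Y) = \tr (X *m Y).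
Proof.
pose f := linfun phi.
have ker : (g :&: lker f)%VS = 0%VS.
  apply/eqP; rewrite -subv0; apply/subvP => Y; rewrite memv_cap memv_ker.
  case/andP => Yg /eqP fY; rewrite memv0; apply/eqP; apply: nd => //.
  move=> Z Zg; rewrite (tr_basis (X := 0)) ?mul0mx ?mxtrace0 // => k.
  move/rowP: fY => /(_ k); rewrite lfunE /= !mxE => ->.
  by rewrite mul0mx mxtrace0.
have full : (f @: g)%VS = fullv.
  apply/eqP; rewrite eqEdim subvf /= dimvf limg_dim_eq //.
  by rewrite /dim /= mul1n.
have : f X \in (f @: g)%VS by rewrite full memvf.
case/memv_imgP => G Gg E; exists G; split => //.
apply: tr_basis => k; move/rowP: E => /(_ k); rewrite !lfunE /= !mxE.
by move=> ->.
Qed.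
End Proj.

Section Lie.
Variables (K : fieldType) (r : nat).
Notation M := ('M[K]_(r, r)).
Implicit Types (x y z : M).

Lemma lie0r x : lie x 0 = 0.
Proof. by rewrite /lie mulmx0 mul0mx subrr. Qed.
Lemma lie0l x : lie 0 x = 0.
Proof. by rewrite /lie mulmx0 mul0mx subrr. Qed.
Lemma lieDl x y z : lie (x + y) z = lie x z + lie y z.
Proof. by rewrite /lie mulmxDl mulmxDr opprD addrACA. Qed.
Lemma lieNl x z : lie (- x) z = - lie x z.
Proof. by rewrite /lie mulNmx mulmxN opprK opprB addrC. Qed.
Lemma lieBl x y z : lie (x - y) z = lie x z - lie y z.
Proof. by rewrite lieDl lieNl. Qed.
Lemma lieZl c x z : lie (c *: x) z = c *: lie x z.
Proof. by rewrite /lie -scalemxAl -scalemxAr scalerBr. Qed.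
Lemma lieZr c x z : lie x (c *: z) = c *: lie x z.
Proof. by rewrite /lie -scalemxAl -scalemxAr scalerBr. Qed.
Lemma lieMnl n x z : lie (x *+ n) z = lie x z *+ n.
Proof. by rewrite -!scaler_nat lieZl. Qed.
Lemma lie_suml (I : Type) (s : seq I) (P : pred I) (F : I -> M) z :
  \sum_(j <- s | P j) lie (F j) z = lie (\sum_(j <- s | P j) F j) z.
Proof. by rewrite /lie mulmx_suml mulmx_sumr -sumrB. Qed.
Lemma tr_lie x y z : \tr (lie x y *m z) = \tr (y *m lie z x).
Proof.
have trB : forall a b : M, \tr (a - b) = \tr a - \tr b.
  by move=> a b; exact: raddfB.
rewrite /lie mulmxBl mulmxBr !trB -!mulmxA; congr (_ - _).
by rewrite mxtrace_mulC -mulmxA.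
Qed.
End Lie.

Lemma sum_neq (V : zmodType) m n i (F : nat -> V) : (m <= i < n)%N ->
  \sum_(m <= j < n | j != i) F j = \sum_(m <= j < n) F j - F i.
Proof.
move=> h; rewrite [X in _ = X - _](bigD1_seq i) ?mem_index_iota ?iota_uniq //=.
by rewrite addrC addrK.
Qed.

Lemma sum_noi (V : zmodType) m n i (F : nat -> V) : ~~ (m <= i < n)%N ->
  \sum_(m <= j < n | j != i) F j = \sum_(m <= j < n) F j.
Proof.
move=> h; rewrite big_seq_cond [RHS]big_seq_cond; apply: eq_bigl => j.
by case: (j =P i) => [->|]; rewrite ?mem_index_iota ?(negbTE h) ?andbT.
Qed.

Lemma comb_lt (V : zmodType) (u v s : V) p q k : (p + q = k + 1)%N ->
  v = (u *+ p - s) + ((s + u *+ q + v) - u) - u *+ k.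
Proof.
move=> e.
have E : u *+ p + u *+ q = u *+ k + u by rewrite -mulrnDr e mulrnDr mulr1n.
rewrite -!addrA addKr addrA E (addrC v) addrA -opprD (addrC u) subrr add0r //.
Qed.

Lemma comb_eq (V : zmodType) (u b0 b1 : V) p k : p = k.+1 -> u + b1 = 0 ->
  - b0 = (u *+ p - b0) + b1 - u *+ k.
Proof.
move=> -> e; rewrite mulrS addrAC [u + _ - b0 - _]addrAC addrK addrAC e add0r //.
Qed.

Section Main.
Variables (K : fieldType) (r N l beta : nat) (A : nat -> 'M[K]_(r, r)).
Hypothesis (hl : (2 <= l <= N)%N).

Definition Pm : 'M[{poly K}]_r := 'X *: pc (A l) + pc (Bl A l).
Definition W := Pm ^+ beta.-1.
Definition C m := cmx m W.
Definition Yf (a j : nat) : 'M[K]_r :=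
  if j == l then (if a is a'.+1 then C a' else 0)
  else if (1 <= j < l)%N then C a else 0.

Lemma comm1 m : lie (A l) (C m) + lie (Bl A l) (C m.+1) = 0.
Proof.
have E : Pm *m W = W *m Pm by rewrite !mulmxE /W -exprS exprSr.
have := congr1 (cmx m.+1) E.
rewrite /Pm mulmxDl mulmxDr !cmxD -scalemxAl -scalemxAr !cmxX.
rewrite !cmx_pcl !cmx_pcr => E'.
by rewrite /lie addrACA E' -opprD subrr.
Qed.

Lemma comm0 : lie (Bl A l) (C 0) = 0.
Proof.
have E : Pm *m W = W *m Pm by rewrite !mulmxE /W -exprS exprSr.
have := congr1 (cmx 0) E.
rewrite /Pm mulmxDl mulmxDr !cmxD -scalemxAl -scalemxAr !cmxX.
rewrite !cmx_pcl !cmx_pcr !add0r => E'.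
by rewrite /lie E' subrr.
Qed.

Lemma Yf_gt a j : (l < j)%N -> Yf a j = 0.
Proof.
move=> h; by rewrite /Yf gtn_eqF // [(j < l)%N]ltnNge (ltnW h) andbF.
Qed.

Lemma main_gl a i : (1 <= i <= N)%N ->
  lie (A i) (Yf a i) = Rop N A (Yf a.+1) i - (l - 2)%:R *: lie (A i) (Yf a.+1 i).
Proof.
case/andP: hl => hl2 hlN; case/andP => hi1 hiN.
have tail : \sum_(1 <= j < N.+1 | j != i) lie (A (minn i j)) (Yf a.+1 j) =
            \sum_(1 <= j < l.+1 | j != i) lie (A (minn i j)) (Yf a.+1 j).
  rewrite (big_cat_nat _ (n := l.+1)) //=.
  rewrite [X in _ + X](_ : _ = 0) ?addr0 //.
  rewrite big_nat_cond; apply: big1 => j /andP[/andP[h1 h2] _].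
  by rewrite Yf_gt ?lie0r.
have Yl : Yf a.+1 l = C a by rewrite /Yf eqxx.
have Ylt : forall b j, (1 <= j < l)%N -> Yf b j = C b.
  by move=> b j /andP[h1 h2]; rewrite /Yf ltn_eqF // h1 h2.
rewrite /Rop tail.
case: (ltngtP i l) => [hlt|hgt|heq].
- rewrite sum_neq; last by rewrite hi1 ltnS ltnW.
  rewrite big_nat_recr /=; last by apply: leq_trans hl2.
  rewrite (minn_idPl (ltnW hlt)) Yl minnn !(Ylt _ i) ?hi1 ?hlt //.
  rewrite (eq_big_nat _ _ (F1 := fun j => lie (A (minn i j)) (Yf a.+1 j))
     (F2 := fun j => lie (A (minn i j)) (C a.+1))); last first.
    by move=> j hj; rewrite Ylt.
  have S1 : \sum_(1 <= j < i) lie (A (minn i j)) (C a.+1) =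
            \sum_(1 <= j < i) lie (A j) (C a.+1).
    by apply: eq_big_nat => j /andP[_ hj]; rewrite (minn_idPr (ltnW hj)).
  have S2 : \sum_(i <= j < l) lie (A (minn i j)) (C a.+1) =
            \sum_(i <= j < l) lie (A i) (C a.+1).
    by apply: eq_big_nat => j /andP[hj _]; rewrite (minn_idPl hj).
  have S0 : \sum_(1 <= j < l) lie (A (minn i j)) (C a.+1) =
     \sum_(1 <= j < i) lie (A j) (C a.+1) + \sum_(i <= j < l) lie (A i) (C a.+1).
    by rewrite (big_cat_nat _ (n := i)) ?(ltnW hlt) //= S1 S2.
  rewrite S0.
  rewrite sumr_const_nat lie_suml.
  rewrite lieBl lieZl !scaler_nat.
  apply: comb_lt; lia.
- rewrite sum_noi; last by apply/negP => /andP[_ h]; lia.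
  rewrite big_nat_recr /=; last by apply: leq_trans hl2.
  rewrite (minn_idPr (ltnW hgt)) Yl.
  have S1 : \sum_(1 <= j < l) lie (A (minn i j)) (Yf a.+1 j) =
            \sum_(1 <= j < l) lie (A j) (C a.+1).
    apply: eq_big_nat => j hj; rewrite Ylt // (minn_idPr _) //.
    by case/andP: hj => _ hj; apply: ltnW (ltn_trans hj hgt).
  rewrite S1.
  rewrite !Yf_gt // !lie0r scaler0 subr0 add0r lie_suml -/(Bl A l).
  by rewrite addrC comm1.
- subst i.
  rewrite sum_neq; last by rewrite hi1 leqnn.
  rewrite big_nat_recr /=; last by apply: leq_trans hl2.
  rewrite addrK.
  have S1 : \sum_(1 <= j < l) lie (A (minn l j)) (Yf a.+1 j) =
            \sum_(1 <= j < l) lie (A j) (C a.+1).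
    apply: eq_big_nat => j hj; rewrite Ylt // (minn_idPr _) //.
    by case/andP: hj => _ hj; apply: ltnW.
  rewrite S1.
  rewrite lie_suml -/(Bl A l) Yl lieBl lieZl scaler_nat -/(Bl A l).
  have -> : lie (A l) (Yf a l) = - lie (Bl A l) (C a).
    rewrite /Yf eqxx; case: a {tail Yl S1} => [|a]; first by rewrite lie0r comm0 oppr0.
    by apply/eqP; rewrite -addr_eq0 comm1.
  rewrite scaler_nat; apply: comb_eq; last exact: comm1.
  lia.
Qed.

Definition Xf a j := beta%:R *: Yf a j.
Definition ei i : {poly K} := if i == l then 'X else if (1 <= i < l)%N then 1 else 0.

Lemma Bl_upd i v : Bl (upd A i (A i + v)) l = Bl A l + (if (1 <= i < l)%N then v else 0).
Proof.
have E : forall k, upd A i (A i + v) k = A k + (if k == i then v else 0).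
  by move=> k; rewrite /upd; case: eqP => [->|]; rewrite ?addr0.
rewrite /Bl; under eq_bigr do rewrite E.
rewrite big_split /=; congr (_ + _).
case h: (1 <= i < l)%N.
  rewrite (bigD1_seq i) ?mem_index_iota ?iota_uniq //= eqxx big1 ?addr0 //.
  by move=> k /negbTE ->.
rewrite big1_seq // => k /andP[_ hk]; case: eqP => // e; move: hk.
by rewrite mem_index_iota e h.
Qed.

Lemma pcD (x y : 'M[K]_r) : pc (x + y) = pc x + pc y.
Proof. exact: map_mxD. Qed.
Lemma pcZ t (x : 'M[K]_r) : pc (t *: x) = t%:P *: pc x.
Proof. exact: map_mxZ. Qed.
Lemma pc0 : pc (0 : 'M[K]_r) = 0.
Proof. exact: map_mx0. Qed.

Lemma upd_P i t Xi :
  'X *: pc (upd A i (A i + t *: Xi) l) + pc (Bl (upd A i (A i + t *: Xi)) l)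
  = Pm + t%:P *: (ei i *: pc Xi).
Proof.
rewrite Bl_upd /Pm /ei /upd; case: (l =P i) => [e|ne].
  subst i; rewrite eqxx ltnn andbF addr0 pcD pcZ !scalerDr !scalerA mulrC.
  by rewrite addrAC.
rewrite eq_sym; case: eqP => // _.
case: (1 <= i < l)%N.
  by rewrite pcD pcZ scale1r addrA.
by rewrite !addr0 scale0r scaler0 addr0.
Qed.

Lemma Fab_cmx a (B : nat -> 'M[K]_r) :
  Fab l beta a B = cmx a (('X *: pc (B l) + pc (Bl B l)) ^+ beta).
Proof. by []. Qed.

Lemma trsum (n : nat) (F : 'I_n -> 'M[K]_r) :
  \tr (\sum_(m < n) F m) = \sum_(m < n) \tr (F m).
Proof. exact: raddf_sum. Qed.

Lemma grad a i Xi : (0 < beta)%N -> exists q : {poly K},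
  (forall t, Hab l beta a (upd A i (A i + t *: Xi)) = q.[t]) /\
  q`_1 = \tr (Xf a i *m Xi).
Proof.
move=> hb.
pose Q := ei i *: pc Xi.
exists (\poly_(m < beta.+1) \tr (cmx a (Sx Pm Q beta m))); split.
  move=> t; rewrite /Hab Fab_cmx upd_P expand cmx_sum trsum horner_poly.
  apply: eq_bigr => m _; rewrite -rmorphXn cmxCZ mxtraceZ mulrC //.
rewrite coef_poly ltnS hb tr_cmx.
have T := trS1 Pm Q beta 0; rewrite expr0 mulmxE mulr1 addn0 in T.
rewrite T coefMn /Xf trZl mulr_natl; congr (_ *+ _).
rewrite -mulmxE /Q -scalemxAl mxtraceZ -/W.
have H : forall m, (\tr (pc Xi *m W))`_m = \tr (C m *m Xi).
  by move=> m; rewrite -tr_cmx cmx_pcl mxtrace_mulC.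
rewrite /ei /Yf; case: eqP => _.
  rewrite coefXM; case: a => [|a] /=; first by rewrite mul0mx mxtrace0.
  exact: H.
case: (1 <= i < l)%N; first by rewrite mul1r H.
by rewrite mul0r coef0 mul0mx mxtrace0.
Qed.
End Main.

Lemma Rop_Z (K : fieldType) (r N : nat) (A G Y : nat -> 'M[K]_r) c i :
  (forall j, G j = c *: Y j) -> Rop N A G i = c *: Rop N A Y i.
Proof.
move=> H; rewrite /Rop scalerDr H lieZr; congr (_ + _).
rewrite scaler_sumr; apply: eq_bigr => j _; by rewrite H lieZr.
Qed.

Lemma trL (K : fieldType) (r : nat) (x y Y : 'M[K]_r) :
  \tr ((x - y) *m Y) = \tr (x *m Y) - \tr (y *m Y).
Proof. by rewrite mulmxBl; exact: raddfB. Qed.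

Lemma trLD (K : fieldType) (r : nat) (x y Y : 'M[K]_r) :
  \tr ((x + y) *m Y) = \tr (x *m Y) + \tr (y *m Y).
Proof. by rewrite mulmxDl mxtraceD. Qed.

Lemma trsum2 (K : fieldType) (r : nat) (s : seq nat) (P : pred nat) (F : nat -> 'M[K]_r) Y :
  \tr ((\sum_(j <- s | P j) F j) *m Y) = \sum_(j <- s | P j) \tr (F j *m Y).
Proof. by rewrite mulmx_suml; exact: raddf_sum. Qed.

Theorem lemma4 (K : fieldType) (r N : nat) (g : {vspace 'M[K]_(r, r)}) :
  [pchar K] =i pred0 ->
  lie_subalgebra g -> semisimple g -> trace_nondeg g ->
  (2 <= N)%N ->
  forall (l beta alpha : nat),
  (2 <= l <= N)%N -> (2 <= beta)%N -> (1 <= alpha <= beta)%N ->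
  forall A : nat -> 'M[K]_(r, r), (forall i, (1 <= i <= N)%N -> A i \in g) ->
  (exists G, is_diff g N (Hab l beta alpha.-1) A G) /\
  (exists G', is_diff g N (Hab l beta alpha) A G') /\
  (forall G G', is_diff g N (Hab l beta alpha.-1) A G ->
                is_diff g N (Hab l beta alpha) A G' ->
   forall i, (1 <= i <= N)%N ->
     Pop A G i = Rop N A G' i - (l - 2)%:R *: Pop A G' i).
Proof.
move=> hch hsub _ hnd hN l beta alpha hl hb ha A hA.
have hb1 : (0 < beta)%N by lia.
case: alpha ha => [|a] ha //=.
pose pr := fun X => proj1_sig (ClassicalEpsilon.constructive_indefinite_description _ (proj_ex hnd X)).
have prP : forall X, pr X \in g /\ forall Y, Y \in g -> \tr (pr X *m Y) = \tr (X *m Y).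
  by move=> X; exact: (proj2_sig (ClassicalEpsilon.constructive_indefinite_description _ (proj_ex hnd X))).
have diff_ex : forall b, exists G, is_diff g N (Hab l beta b) A G.
  move=> b; exists (fun j => pr (Xf l beta A b j)) => i hi; split; first by case: (prP (Xf l beta A b i)).
  move=> Xi hXi; case: (grad l A b i Xi hb1) => q [hq1 hq2]; exists q; split => //.
  by rewrite hq2; case: (prP (Xf l beta A b i)) => _ ->.
split; first exact: diff_ex.
split; first exact: diff_ex.
move=> G G' hG hG' i hi.
have uniqG : forall b (H : nat -> 'M[K]_r), is_diff g N (Hab l beta b) A H ->
    forall j, (1 <= j <= N)%N -> forall Xi, Xi \in g ->
    \tr (H j *m Xi) = \tr (Xf l beta A b j *m Xi).
  move=> b H hH j hj Xi hXi; case: (hH j hj) => _ /(_ Xi hXi) [q [hq1 hq2]].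
  case: (grad l A b j Xi hb1) => q' [hq1' hq2'].
  rewrite -hq2 -hq2' (poly_eq_ev hch (p := q) (q := q')) // => t.
  by rewrite -hq1 hq1'.
have transfer : forall b (H : nat -> 'M[K]_r), is_diff g N (Hab l beta b) A H ->
    forall a0 j Y, a0 \in g -> (1 <= j <= N)%N -> Y \in g ->
    \tr (lie a0 (H j) *m Y) = \tr (lie a0 (Xf l beta A b j) *m Y).
  move=> b H hH a0 j Y ha0 hj hY; rewrite !tr_lie; apply: (uniqG b H hH j hj).
  exact: hsub.
have Gg : forall j, (1 <= j <= N)%N -> G j \in g by move=> j hj; case: (hG j hj).
have G'g : forall j, (1 <= j <= N)%N -> G' j \in g by move=> j hj; case: (hG' j hj).
have M0 : Pop A (Xf l beta A a) i =
          Rop N A (Xf l beta A a.+1) i - (l - 2)%:R *: Pop A (Xf l beta A a.+1) i.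
  rewrite /Pop (@Rop_Z _ _ N A _ (Yf l beta A a.+1) beta%:R i) //.
  rewrite /Xf !lieZr (main_gl beta A hl a hi) scalerBr !scalerA mulrC.
  by [].
have first_g : (i.-1)%:R *: A i - \sum_(1 <= k < i) A k \in g.
  apply: memvB; first by apply: memvZ; apply: hA.
  rewrite big_nat_cond; apply: memv_suml => k /andP[/andP[h1 h2] _].
  apply: hA; lia.
apply/subr0_eq; apply: (hnd _).
  apply: memvB; first by apply: hsub; [apply: hA | apply: Gg].
  apply: memvB; last by apply: memvZ; apply: hsub; [apply: hA | apply: G'g].
  apply: memvD; first by apply: hsub => //; apply: G'g.
  rewrite big_nat_cond; apply: memv_suml => j /andP[/andP[h1 h2] _].
  by apply: hsub; [apply: hA; lia | apply: G'g; lia].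
move=> Y hY.
have E1 : \tr (Pop A G i *m Y) = \tr (Pop A (Xf l beta A a) i *m Y).
  by apply: (transfer a G hG) => //; apply: hA.
have E3 : \tr (Pop A G' i *m Y) = \tr (Pop A (Xf l beta A a.+1) i *m Y).
  by apply: (transfer a.+1 G' hG') => //; apply: hA.
have E2 : \tr (Rop N A G' i *m Y) = \tr (Rop N A (Xf l beta A a.+1) i *m Y).
  rewrite /Rop trLD [RHS]trLD; congr (_ + _); first by apply: (transfer a.+1 G' hG').
  rewrite !trsum2 big_nat_cond [RHS]big_nat_cond.
  apply: eq_bigr => j /andP[/andP[h1 h2] _].
  apply: (transfer a.+1 G' hG') => //; first by apply: hA; lia.
  lia.
have key : forall P1 R1 P2 : 'M[K]_r, \tr ((P1 - (R1 - (l - 2)%:R *: P2)) *m Y) =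
    \tr (P1 *m Y) - (\tr (R1 *m Y) - (l - 2)%:R * \tr (P2 *m Y)).
  by move=> P1 R1 P2; rewrite !trL trZl.
by rewrite key E1 E2 E3 -key M0 subrr mul0mx mxtrace0.
Qed.
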